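(* Let $\alpha,\beta\in[0,1)$ and let $\lambda$ be a zero of $\mathcal D(\beta,\cdot)$. Set $\mathcal H(\alpha,\beta,x)=A(\alpha,\beta,\lambda)-A(\alpha,\beta,x)+64\mathcal D(\beta,x)(1-x)$. Then $\lambda$ is a multiple zero of $\mathcal H(\alpha,\beta,\cdot)$ if and only if $$8(\lambda-1)\Big(1-2\big(\lambda^2-2\lambda(3-\lambda)+\tfrac{45}{16}\big)\Big)=\cos(2\pi\alpha).$$
   Context: $A(\alpha,\beta,\lambda)=16\lambda^2-(32+4\cos2\pi\alpha)\lambda+15+4\cos2\pi\alpha+\cos(2\pi(\alpha+\beta))$; $\mathcal D(\beta,\lambda)=-\lambda^3+3\lambda^2-\frac{45}{16}\lambda+\frac{13}{16}-\frac1{32}\cos(2\pi\beta)$. *)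

(* Defs.v *)
From HB Require Import structures.
From mathcomp Require Import all_boot all_order all_algebra.
From mathcomp Require Import reals trigo.
Set Implicit Arguments. Unset Strict Implicit. Unset Printing Implicit Defensive.
Import Order.TTheory GRing.Theory Num.Theory.
Local Open Scope ring_scope.

Section Defs.
Variable R : realType.

Definition Apoly (a b : R) : {poly R} :=
  16%:R *: 'X^2 - (32%:R + 4%:R * cos (2%:R * pi * a)) *: 'X
  + (15%:R + 4%:R * cos (2%:R * pi * a) + cos (2%:R * pi * (a + b)))%:P.

Definition Dpoly (b : R) : {poly R} :=
  - 'X^3 + 3%:R *: 'X^2 - (45%:R / 16%:R) *: 'X
  + (13%:R / 16%:R - cos (2%:R * pi * b) / 32%:R)%:P.

Definition A (a b x : R) : R := (Apoly a b).[x].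
Definition D (b x : R) : R := (Dpoly b).[x].

Definition Hpoly (a b lam : R) : {poly R} :=
  (A a b lam)%:P - Apoly a b + 64%:R *: (Dpoly b * (1 - 'X)).

Definition multiple_root (p : {poly R}) (lam : R) : Prop :=
  ('X - lam%:P) ^+ 2 %| p.
End Defs.

(* Main.v *)
Require Import Defs.
From HB Require Import structures.
From mathcomp Require Import all_boot all_order all_algebra.
From mathcomp Require Import reals trigo.
From mathcomp Require Import ring lra.
Import Order.TTheory GRing.Theory Num.Theory.
Local Open Scope ring_scope.

Lemma mult_deriv (R : fieldType) (p : {poly R}) x :
  root p x -> (('X - x%:P) ^+ 2 %| p) = (root p^`() x).
Proof.
move/factor_theorem=> [q ->].
rewrite expr2 dvdp_mul2r ?polyXsubC_eq0 // dvdp_XsubCl derivM derivXsubC.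
by rewrite /root !hornerE subrr mulr0 add0r.
Qed.

Theorem lemma4p6 (R : realType) (a b lam : R)
  (ha : 0 <= a < 1) (hb : 0 <= b < 1) (hlam : D b lam = 0) :
  multiple_root (Hpoly a b lam) lam <->
  8%:R * (lam - 1) *
    (1 - 2%:R * (lam ^+ 2 - 2%:R * lam * (3%:R - lam) + 45%:R / 16%:R))
  = cos (2%:R * pi * a).
Proof.
have hr : root (Hpoly a b lam) lam.
  move: hlam; rewrite /root /Hpoly /D /A => hl.
  rewrite /Hpoly; move: (Dpoly b) hl => P hl.
  rewrite !(hornerD, hornerN, hornerC, hornerZ, hornerM, hornerX) hl.
  by apply/eqP; ring.
rewrite /multiple_root; rewrite (@mult_deriv _ _ _ hr).
move: hlam; rewrite /root /Hpoly /D /A /Apoly /Dpoly => hl.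
rewrite !derivE !hornerE.
move: hl; rewrite !hornerE => hl.
set c := cos _.
rewrite hl mul0r addr0; split => [/eqP h | h].
  nra.
apply/eqP; nra.
Qed.
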